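(* Let $f\in\mathscr{C}^1(\mathbb{R},\mathbb{R})$ and $n\ge 2$. Then \[ \mathbb{E}[f'(Z_n)] = K_n\,\mathbb{E}\big[e^{-\beta_n Z_{n-1}}\,f'\big(\alpha_n Z_{n-1}+G_n+\delta_n\big)\big], \] where $G_n$ has the distribution $n^{-1}\operatorname{Geom}(1/n)$ and is independent of $Z_{n-1}$.
   Context: For $m\ge1$, $Z_m=\frac{T_m}{m}-\log m$, where $T_m=\sum_{i=1}^m\tau_i^m$ with $\tau_1^m,\dots,\tau_m^m$ independent and $\tau_i^m\sim\operatorname{Geom}\big(\frac{m-i+1}{m}\big)$ ($T_m$ is the coupon collector's completion time for $m$ coupons). $\operatorname{Geom}(p)$, $p\in(0,1]$, is the geometric law on $\{1,2,\dots\}$: $P(k)=p(1-p)^{k-1}$. Constants: $\alpha_n=1-\frac1n$, $\beta_n=-(n-1)\log\alpha_n$, $K_n=n\big(1-\frac1n\big)^{(n-1)\log(n-1)}$, $\delta_n=\log\big(1-\frac1n\big)-\frac1n\log(n-1)$. *)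

(* Defs.v *)
From HB Require Import structures.
From mathcomp Require Import all_boot all_order all_algebra.
From mathcomp Require Import all_classical all_reals all_analysis.
Set Implicit Arguments. Unset Strict Implicit. Unset Printing Implicit Defensive.
Import Order.TTheory GRing.Theory Num.Theory.
Local Open Scope classical_set_scope.
Local Open Scope ring_scope.

Section defs.
Context {d : measure_display} {T : measurableType d} {R : realType}.

Definition is_geom (P : probability T R) (X : T -> R) (p : R) : Prop :=
  forall k : nat, (1 <= k)%N ->
    P (X @^-1` [set k%:R]) = (p * (1 - p) ^+ (k - 1))%:E.

Definition is_scaled_geom (P : probability T R) (X : T -> R) (c p : R) : Prop :=
  forall k : nat, (1 <= k)%N ->
    P (X @^-1` [set c * k%:R]) = (p * (1 - p) ^+ (k - 1))%:E.

Definition mutually_independent (P : probability T R) (I : seq nat)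
    (X : nat -> T -> R) : Prop :=
  forall (J : seq nat) (B : nat -> set R),
    uniq J -> {subset J <= I} -> (forall i, measurable (B i)) ->
    P (\bigcap_(i in [set i | i \in J]) (X i @^-1` B i)) =
    (\prod_(i <- J) P (X i @^-1` B i))%E.

Definition independent2 (P : probability T R) (X Y : T -> R) : Prop :=
  forall A B : set R, measurable A -> measurable B ->
    P (X @^-1` A `&` Y @^-1` B) = (P (X @^-1` A) * P (Y @^-1` B))%E.

End defs.

Definition Tm {T : Type} {R : realType} (tau : nat -> nat -> T -> R) (m : nat)
  (w : T) : R := \sum_(1 <= i < m.+1) tau m i w.
Definition Zm {T : Type} {R : realType} (tau : nat -> nat -> T -> R) (m : nat)
  (w : T) : R := Tm tau m w / m%:R - ln m%:R.

Definition alpha_ {R : realType} (n : nat) : R := 1 - n%:R^-1.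
Definition beta_ {R : realType} (n : nat) : R := - ((n - 1)%:R * ln (alpha_ n)).
Definition K_ {R : realType} (n : nat) : R :=
  n%:R * powR (1 - n%:R^-1) ((n - 1)%:R * ln (n - 1)%:R).
Definition delta_ {R : realType} (n : nat) : R :=
  ln (1 - n%:R^-1) - n%:R^-1 * ln (n - 1)%:R.

(* Main.v *)
Require Import Defs.
From HB Require Import structures.
From mathcomp Require Import all_boot all_order all_algebra.
From mathcomp Require Import all_classical all_reals all_analysis.
From mathcomp Require Import measurable_realfun.
From mathcomp Require Import ring lra.
Import Order.TTheory GRing.Theory Num.Theory.
Import numFieldNormedType.Exports.
Local Open Scope classical_set_scope.
Local Open Scope ring_scope.

Section gen.
Context {d : measure_display} {T : measurableType d} {R : realType}.
Variable (P : probability T R).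
Local Open Scope ereal_scope.

Lemma mpre1 (X : T -> R) (mX : measurable_fun [set: T] X) (r : R) :
  measurable (X @^-1` [set r]).
Proof. by rewrite -[X @^-1` _]setTI; apply: mX => //; exact: measurable_set1. Qed.

Lemma mpre (X : T -> R) (mX : measurable_fun [set: T] X) (B : set R) :
  measurable B -> measurable (X @^-1` B).
Proof. by move=> mB; rewrite -[X @^-1` _]setTI; apply: mX. Qed.

Lemma decomp_int (D : set T) (h : T -> \bar R) (X : T -> R) (x : nat -> R) :
  measurable D -> measurable_fun [set: T] h -> (forall t, 0 <= h t) ->
  measurable_fun [set: T] X -> injective x ->
  P (~` \bigcup_k X @^-1` [set x k]) = 0 ->
  \int[P]_(w in D) h w = \sum_(k <oo) \int[P]_(w in D `&` X @^-1` [set x k]) h w.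
Proof.
move=> mD mh h0 mX xinj null.
have mU : measurable (\bigcup_k X @^-1` [set x k]).
  by apply: bigcupT_measurable => k; exact: mpre1.
have eD : D = (\bigcup_k (D `&` X @^-1` [set x k])) `|` (D `&` ~` \bigcup_k X @^-1` [set x k]).
  by rewrite -setI_bigcupr -setIUr setUCr setIT.
rewrite {1}eD.
have mk k : measurable (D `&` X @^-1` [set x k]) by apply: measurableI => //; exact: mpre1.
rewrite ge0_integral_setU //; last 4 first.
- by apply: bigcupT_measurable.
- by apply: measurableI => //; exact: measurableC.
- exact: measurable_funTS.
- rewrite -setI_bigcupr; apply/disj_setPS => t [[_ +] [_ +]] //.
rewrite [X in _ + X]null_set_integral //; last 3 first.
- by apply: measurableI => //; exact: measurableC.
- exact: measurable_funTS.
  apply/eqP; rewrite eq_le measure_ge0 andbT -null; apply: le_measure => //.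
  + by rewrite inE; apply: measurableI => //; exact: measurableC.
  + by rewrite inE; exact: measurableC.



rewrite adde0 ge0_integral_bigcup //.
- exact: measurable_funTS.
- move=> i j _ _ [t [[_ /= ->] [_ /= e]]]; exact: xinj.
Qed.

End gen.


Section gen2.
Context {d : measure_display} {T : measurableType d} {R : realType}.
Variable (P : probability T R).
Local Open Scope ereal_scope.

Lemma decomp_meas (A : set T) (X : T -> R) (x : nat -> R) :
  measurable A -> measurable_fun [set: T] X -> injective x ->
  P (~` \bigcup_k X @^-1` [set x k]) = 0 ->
  P A = \sum_(k <oo) P (A `&` X @^-1` [set x k]).
Proof.
move=> mA mX xinj null.
rewrite -[P A]mul1e -(integral_cst P mA).
rewrite (@decomp_int _ _ _ P A (cst 1) X x) //.
apply: eq_eseriesr => k _; rewrite integral_cst ?mul1e //.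
by apply: measurableI => //; exact: mpre1.
Qed.

Lemma geom_sum (p : R) : (0 < p <= 1)%R -> \sum_(k <oo) (p * (1-p)^+k)%:E = 1.
Proof.
move=> /andP[p0 p1].
have cg : series (geometric p (1-p)) @ \oo --> (p / (1 - (1 - p)))%R.
  apply: cvg_geometric_series; rewrite ger0_norm ?subr_ge0 //.
  by rewrite ltrBlDr ltrDl.
have -> : \sum_(k <oo) (p * (1-p)^+k)%:E = limn (EFin \o series (geometric p (1-p))).
  by congr (limn _); apply/funext => n /=; rewrite /series /= sumEFin.
rewrite EFin_lim; last by apply/cvg_ex; eexists; exact: cg.
rewrite (cvg_lim _ cg) //; congr (_%:E).
by rewrite opprB addrCA subrr addr0 divff // gt_eqF.
Qed.

Lemma geom_null (X : T -> R) (x : nat -> R) (p : R) :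
  measurable_fun [set: T] X -> injective x -> (0 < p <= 1)%R ->
  (forall k, P (X @^-1` [set x k]) = (p * (1-p)^+k)%:E) ->
  P (~` \bigcup_k X @^-1` [set x k]) = 0.
Proof.
move=> mX xinj p01 hX.
rewrite probability_setC; last by apply: bigcupT_measurable => k; exact: mpre1.
rewrite measure_bigcup //=; last 2 first.
- by move=> k _; exact: mpre1.
- by move=> i j _ _ [t [/= -> e]]; exact: xinj.
rewrite (eq_eseriesr (g := fun k => (p * (1-p)^+k)%:E)); last by move=> k _; rewrite hX.
rewrite [X in 1 - X](_ : _ = \sum_(k <oo) (p * (1-p)^+k)%:E); last first.
  by congr (limn _); apply/funext => n; apply: eq_bigl => i; rewrite in_setT.
by rewrite (geom_sum p p01) subee.

Qed.

Lemma double_int (h : T -> \bar R) (X Y : T -> R) (x y : nat -> R)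
  (c : nat -> nat -> \bar R) :
  measurable_fun [set: T] h -> (forall t, 0 <= h t) ->
  measurable_fun [set: T] X -> measurable_fun [set: T] Y ->
  injective x -> injective y ->
  P (~` \bigcup_k X @^-1` [set x k]) = 0 -> P (~` \bigcup_k Y @^-1` [set y k]) = 0 ->
  (forall s k t, X t = x s -> Y t = y k -> h t = c s k) ->
  \int[P]_w h w = \sum_(s <oo) \sum_(k <oo)
     (c s k * P (X @^-1` [set x s] `&` Y @^-1` [set y k])).
Proof.
move=> mh h0 mX mY xinj yinj nullX nullY hc.
rewrite (@decomp_int _ _ _ P setT h X x measurableT mh h0 mX xinj nullX).
apply: eq_eseriesr => s _.
have mXs : measurable (setT `&` X @^-1` [set x s]) by apply: measurableI => //; exact: mpre1.
rewrite (@decomp_int _ _ _ P _ h Y y mXs mh h0 mY yinj nullY).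
apply: eq_eseriesr => k _.
rewrite setTI.
have mA : measurable (X @^-1` [set x s] `&` Y @^-1` [set y k]).
  by apply: measurableI; exact: mpre1.
rewrite -(integral_cst P mA); apply: eq_integral => t; rewrite inE => -[Xs Yk].
exact: hc.
Qed.

End gen2.


Definition Sp {T : Type} {R : realType} (tau : nat -> T -> R) (j : nat) (w : T) : R :=
  \sum_(1 <= i < j.+1) tau i w.

Lemma SpS {T : Type} {R : realType} (tau : nat -> T -> R) j w :
  Sp tau j.+1 w = Sp tau j w + tau j.+1 w.
Proof. by rewrite /Sp big_nat_recr. Qed.

Lemma Sp0 {T : Type} {R : realType} (tau : nat -> T -> R) w : Sp tau 0 w = 0.
Proof. by rewrite /Sp big_geq. Qed.

Lemma natS_inj {R : realType} : injective (fun k : nat => (k.+1)%:R : R).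
Proof. by move=> a b /eqP; rewrite eqr_nat => /eqP []. Qed.

Lemma nat_inj {R : realType} : injective (fun k : nat => k%:R : R).
Proof. by move=> a b /eqP; rewrite eqr_nat => /eqP. Qed.

Section psums.
Context {d : measure_display} {T : measurableType d} {R : realType}.
Variable (P : probability T R).
Variables (tau : nat -> T -> R) (m : nat).
Hypothesis mtau : forall i, measurable_fun [set: T] (tau i).
Hypothesis indep : mutually_independent P (index_iota 1 m.+1) tau.
Hypothesis nulltau : forall i, (1 <= i <= m)%N ->
  P (~` \bigcup_k tau i @^-1` [set (k.+1)%:R]) = 0%E.
Local Open Scope ereal_scope.

Lemma mSp j : measurable_fun [set: T] (Sp tau j).
Proof. by apply: measurable_sum. Qed.

Definition C (J : seq nat) (B : nat -> set R) :=
  \bigcap_(i in [set i | i \in J]) tau i @^-1` B i.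

Lemma C_nil B : C [::] B = setT.
Proof.
rewrite /C (_ : [set i | i \in [::]] = set0) ?bigcap_set0 //.
by apply/seteqP; split => i.
Qed.

Lemma C_cons a J B : C (a :: J) B = tau a @^-1` B a `&` C J B.
Proof.
rewrite /C (_ : [set i | i \in a :: J] = a |` [set i | i \in J]) ?bigcap_setU1 //.
apply/seteqP; split => i /=.
- by rewrite inE => /orP[/eqP ->|h]; [left|right].
- by rewrite inE => -[->|h]; rewrite ?eqxx ?h ?orbT.
Qed.

Lemma mC J B : (forall i, measurable (B i)) -> measurable (C J B).
Proof.
move=> mB; elim: J => [|a J IH]; first by rewrite C_nil.
by rewrite C_cons; apply: measurableI => //; exact: mpre.
Qed.

Lemma stepK j a A : (j < m)%N -> measurable A ->
  P (Sp tau j.+1 @^-1` [set a] `&` A) =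
  \sum_(k <oo) P (Sp tau j @^-1` [set (a - (k.+1)%:R)%R] `&`
                  (tau j.+1 @^-1` [set (k.+1)%:R] `&` A)).
Proof.
move=> jm mA.
rewrite (@decomp_meas _ _ _ P _ (tau j.+1) (fun k => (k.+1)%:R)) //; last 3 first.
- by apply: measurableI => //; exact: (mpre1 _ (mSp _)).
- exact: natS_inj.
- by apply: nulltau; rewrite ltn0Sn.
apply: eq_eseriesr => k _; congr (P _); apply/seteqP; split => t /=.
- move=> [[Sa At] tk]; split; last by [].
  by rewrite -Sa SpS tk addrK.
- move=> [Sa [tk At]]; split; last by [].
  by split => //; rewrite SpS Sa tk subrK.
Qed.

Lemma conv_of j a : (j < m)%N ->
  (forall a' k, P (Sp tau j @^-1` [set a'] `&` tau j.+1 @^-1` [set (k.+1)%:R]) =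
     P (Sp tau j @^-1` [set a']) * P (tau j.+1 @^-1` [set (k.+1)%:R])) ->
  P (Sp tau j.+1 @^-1` [set a]) = \sum_(k <oo)
    (P (Sp tau j @^-1` [set (a - (k.+1)%:R)%R]) * P (tau j.+1 @^-1` [set (k.+1)%:R])).
Proof.
move=> jm H; rewrite -[X in P X]setIT stepK //; apply: eq_eseriesr => k _.
by rewrite setIT H.
Qed.

Lemma C_prod J B : uniq J -> {subset J <= index_iota 1 m.+1} ->
  (forall i, measurable (B i)) -> P (C J B) = \prod_(i <- J) P (tau i @^-1` B i).
Proof. exact: indep. Qed.

Lemma indepS j : (j <= m)%N -> forall a J B, uniq J ->
  (forall i, i \in J -> (j < i <= m)%N) -> (forall i, measurable (B i)) ->
  P (Sp tau j @^-1` [set a] `&` C J B) = P (Sp tau j @^-1` [set a]) * P (C J B).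
Proof.
elim: j => [|j IH] hj a J B uJ hJ mB.
  have [->|a0] := eqVneq a 0%R.
    rewrite (_ : Sp tau 0 @^-1` [set 0%R] = setT); last first.
      by apply/seteqP; split => t //= _; rewrite Sp0.
    by rewrite setTI probability_setT mul1e.
  rewrite (_ : Sp tau 0 @^-1` [set a] = set0); last first.
    apply/seteqP; split => t //=; rewrite Sp0 => /esym/eqP.
    by rewrite (negbTE a0).
  by rewrite set0I measure0 mul0e.
have jm : (j < m)%N by [].
have hJ' : forall i, i \in j.+1 :: J -> (j < i <= m)%N.
  move=> i; rewrite inE => /orP[/eqP ->|/hJ]; first by rewrite ltnSn.
  by case/andP => /ltnW -> ->.
pose B' k i := if i == j.+1 then [set (k.+1)%:R] else B i.
have mB' k i : measurable (B' k i).
  by rewrite /B'; case: ifP => _ //; exact: measurable_set1.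
have nJ : j.+1 \notin J by apply/negP => /hJ; rewrite ltnn.
have uJ' : uniq (j.+1 :: J) by rewrite /= nJ.
have CB' k : C (j.+1 :: J) (B' k) = tau j.+1 @^-1` [set (k.+1)%:R] `&` C J B.
  rewrite C_cons /B' eqxx; congr (_ `&` _); apply: eq_bigcapr => i /= iJ.
  by rewrite ifF //; apply/negbTE; apply: contraNneq nJ => <-.
have sub (J0 : seq nat) : (forall i, i \in J0 -> (j < i <= m)%N) -> {subset J0 <= index_iota 1 m.+1}.
  by move=> h i /h /andP[ji im]; rewrite mem_index_iota ltnS im (leq_ltn_trans _ ji).
have pE k : P (tau j.+1 @^-1` [set (k.+1)%:R] `&` C J B) =
    P (tau j.+1 @^-1` [set (k.+1)%:R]) * P (C J B).
  rewrite -CB' (C_prod _ _ uJ' (sub _ hJ') (mB' k)) big_cons /B' eqxx.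
  rewrite (C_prod _ _ uJ); last 2 first.
  - by apply: sub => i /hJ /andP[ji ->]; rewrite andbT ltnW.
  - exact: mB.
  congr (_ * _); apply: eq_big_seq => i iJ; rewrite ifF //.
  by apply/negbTE; apply: contraNneq nJ => <-.
have IHj a' (J0 : seq nat) B0 : uniq J0 -> (forall i, i \in J0 -> (j < i <= m)%N) ->
    (forall i, measurable (B0 i)) ->
    P (Sp tau j @^-1` [set a'] `&` C J0 B0) = P (Sp tau j @^-1` [set a']) * P (C J0 B0).
  by move=> *; apply: IH => //; exact: ltnW.
have H1 a' k : P (Sp tau j @^-1` [set a'] `&` tau j.+1 @^-1` [set (k.+1)%:R]) =
    P (Sp tau j @^-1` [set a']) * P (tau j.+1 @^-1` [set (k.+1)%:R]).
  have e : tau j.+1 @^-1` [set (k.+1)%:R] = C [:: j.+1] (fun _ => [set (k.+1)%:R]).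
    by rewrite C_cons C_nil setIT.
  rewrite e IHj //; try (by move=> i; rewrite inE => /eqP ->; rewrite ltnSn);
    try (by move=> _; exact: measurable_set1).
have fC : P (C J B) \is a fin_num by apply: fin_num_measure; exact: mC.
rewrite (stepK _ _ _ jm (mC _ _ mB)).
rewrite (conv_of _ a jm H1).
have -> : \sum_(k <oo) P (Sp tau j @^-1` [set (a - (k.+1)%:R)%R] `&`
      (tau j.+1 @^-1` [set (k.+1)%:R] `&` C J B)) =
  \sum_(k <oo) ((fine (P (C J B)))%:E * (P (Sp tau j @^-1` [set (a - (k.+1)%:R)%R]) *
      P (tau j.+1 @^-1` [set (k.+1)%:R]))).
  apply: eq_eseriesr => k _.
  rewrite -CB' (IHj _ _ _ uJ' hJ' (mB' k)) CB' pE fineK //.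
  by rewrite muleA muleC.
rewrite nneseriesZl; last by move=> k _; apply: mule_ge0.
by rewrite fineK // muleC.
Qed.

Lemma Sp_nat j : (j <= m)%N -> P (~` \bigcup_s Sp tau j @^-1` [set s%:R]) = 0.
Proof.
elim: j => [|j IH] hj.
  rewrite (_ : ~` _ = set0) ?measure0 //.
  apply/seteqP; split => t //= nt; apply: nt; exists 0%N => //=.
  by rewrite Sp0.
have mU j0 : measurable (\bigcup_s Sp tau j0 @^-1` [set s%:R]).
  by apply: bigcupT_measurable => s; exact: (mpre1 _ (mSp _)).
have mV : measurable (\bigcup_k tau j.+1 @^-1` [set (k.+1)%:R]).
  by apply: bigcupT_measurable => s; exact: (mpre1 _ (mtau _)).
apply/eqP; rewrite eq_le measure_ge0 andbT.
apply: (@le_trans _ _ (P (~` (\bigcup_s Sp tau j @^-1` [set s%:R]) `|`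
    ~` (\bigcup_k tau j.+1 @^-1` [set (k.+1)%:R])))).
  apply: le_measure; rewrite ?inE.
  - exact: measurableC.
  - by apply: measurableU; exact: measurableC.
  rewrite -setCI; apply: subsetC => t [[s _ /= Ss] [k _ /= tk]].
  by exists (s + k.+1)%N => //=; rewrite SpS Ss tk natrD.
apply: (le_trans (measureU2 _ _ _)).
- exact: measurableC.
- exact: measurableC.
have H0 (x y : \bar R) : x = 0 -> y = 0 -> x + y <= 0 by move=> -> ->; rewrite adde0.
by apply: H0; [exact: IH (ltnW hj) | exact: nulltau].
Qed.

Lemma conv j a : (j < m)%N ->
  P (Sp tau j.+1 @^-1` [set a]) = \sum_(k <oo)
    (P (Sp tau j @^-1` [set (a - (k.+1)%:R)%R]) * P (tau j.+1 @^-1` [set (k.+1)%:R])).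
Proof.
move=> jm; apply: conv_of => // a' k.
have e : tau j.+1 @^-1` [set (k.+1)%:R] = C [:: j.+1] (fun _ => [set (k.+1)%:R]).
  by rewrite C_cons C_nil setIT.
rewrite e indepS //; try (by move=> i; rewrite inE => /eqP ->; rewrite ltnSn jm);
  try (by move=> _; exact: measurable_set1).
exact: ltnW.
Qed.

End psums.


Lemma tilt_real {R : realType} (n' j k : nat) : (j < n'.+1)%N ->
  let n := n'.+2 in
  let al := 1 - n%:R^-1 : R in
  let q := ((n.-1).+1 - j.+1)%:R / (n.-1)%:R : R in
  let p := (n.+1 - j.+1)%:R / n%:R : R in
  ((n - j)%:R / n%:R) * (expR ((k.+1)%:R * ln al) * (q * (1 - q)^+k)) =
  ((n - j.+1)%:R / n%:R) * (p * (1-p)^+k).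
Proof.
move=> jn n al q p.
have al0 : 0 < al.
  rewrite /al /n subr_gt0 invf_lt1 // ltr1n //.
rewrite expRM_natl lnK ?posrE //.
have hq : q = (n'%:R + 1 - j%:R) / (n'%:R + 1).
  rewrite /q /n /= subSS natrB 1?ltnW //. by rewrite -[n'.+1]addn1 natrD.
have jle1 : (j <= n'.+1)%N by exact: ltnW.
have jle2 : (j <= n'.+2)%N by exact: (leq_trans jle1).
have hp : p = (n'%:R + 2 - j%:R) / (n'%:R + 2).
  rewrite /p /n subSS (natrB _ jle2) -!natr1; congr (_ / _); ring.
have hc1 : ((n - j)%:R / n%:R : R) = (n'%:R + 2 - j%:R) / (n'%:R + 2).
  rewrite /n (natrB _ jle2) -!natr1; congr (_ / _); ring.
have hc2 : ((n - j.+1)%:R / n%:R : R) = (n'%:R + 1 - j%:R) / (n'%:R + 2).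
  rewrite /n subSS (natrB _ jle1) -!natr1; congr (_ / _); ring.
have N1 : (n'%:R + 1 : R) != 0 by rewrite natr1.
have N2 : (n'%:R + 2 : R) != 0.
  by rewrite (_ : n'%:R + 2 = n'.+2%:R) // -!natr1; ring.
have N3 : (n'%:R + 1 + 1 : R) != 0 by rewrite -addrA.
have hal : al = (n'%:R + 1) / (n'%:R + 2).
  by rewrite /al /n -!natr1; field.
have e1 : al * (1 - q) = 1 - p.
  by rewrite hal hq hp; field; rewrite N1 N2.
rewrite hc1 hc2 exprS -e1 exprMn.
have e2 : (n - j)%:R / n%:R * (al * q) = (n - j.+1)%:R / n%:R * p.
  by rewrite hc1 hc2 hal hq hp; field; rewrite N1 N2.
have key c1 c2 A B : c1 * (al * q) = c2 * p ->
    c1 * (al * A * (q * B)) = c2 * (p * (A * B)).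
  move=> e; transitivity ((c1 * (al * q)) * (A * B)); first by ring.
  by rewrite e; ring.
by apply: key; rewrite -hc1 -hc2.
Qed.

Lemma tilt_real' {R : realType} (n' j k : nat) : (j < n'.+1)%N ->
  ((n'.+2 - j)%:R / n'.+2%:R) * (expR ((k.+1)%:R * ln (1 - n'.+2%:R^-1)) *
   ((n'.+2 - j.+1)%:R / n'.+1%:R * (1 - (n'.+2 - j.+1)%:R / n'.+1%:R)^+k)) =
  ((n'.+2 - j.+1)%:R / n'.+2%:R) *
   ((n'.+3 - j.+1)%:R / n'.+2%:R * (1 - (n'.+3 - j.+1)%:R / n'.+2%:R)^+k) :> R.
Proof. move=> h; exact: (tilt_real n' j k h). Qed.

Lemma p_ok {R : realType} (m i : nat) : (1 <= m)%N -> (1 <= i <= m)%N ->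
  (0 < ((m.+1 - i)%:R / m%:R : R) <= 1).
Proof.
move=> m1 /andP[i1 im].
have m0 : (0 < m%:R :> R) by rewrite ltr0n.
apply/andP; split.
  by apply: divr_gt0 => //; rewrite ltr0n subn_gt0 ltnS.
rewrite ler_pdivrMr // mul1r ler_nat leq_subLR.
by rewrite -addn1 addnC leq_add2r.
Qed.

Section tilt.
Context {d : measure_display} {T : measurableType d} {R : realType}.
Variable (P : probability T R).
Variable tau : nat -> nat -> T -> R.
Hypothesis mtau : forall m i, measurable_fun [set: T] (tau m i).
Hypothesis hgeom : forall m i : nat, (1 <= m)%N -> (1 <= i <= m)%N ->
     is_geom P (tau m i) ((m.+1 - i)%:R / m%:R).
Hypothesis hind : forall m : nat, (1 <= m)%N ->
     mutually_independent P (index_iota 1 m.+1) (tau m).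

Lemma distr (m i k : nat) : (1 <= m)%N -> (1 <= i <= m)%N ->
  P (tau m i @^-1` [set (k.+1)%:R]) =
  (((m.+1 - i)%:R / m%:R) * (1 - (m.+1 - i)%:R / m%:R)^+k)%:E.
Proof. by move=> m1 im; rewrite (hgeom _ _ m1 im k.+1) // subn1. Qed.

Lemma nullm (m : nat) : (1 <= m)%N -> forall i, (1 <= i <= m)%N ->
  P (~` \bigcup_k tau m i @^-1` [set (k.+1)%:R]) = 0%E.
Proof.
move=> m1 i im; apply: (geom_null P _ _ _ (mtau m i) natS_inj (p_ok _ _ m1 im)).
by move=> k; rewrite distr.
Qed.

Lemma convm (m j : nat) (a : R) : (1 <= m)%N -> (j < m)%N ->
  P (Sp (tau m) j.+1 @^-1` [set a]) = (\sum_(k <oo)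
    (P (Sp (tau m) j @^-1` [set (a - (k.+1)%:R)%R]) *
     P (tau m j.+1 @^-1` [set (k.+1)%:R])))%E.
Proof.
move=> m1 jm; exact: (@conv _ _ _ P (tau m) m (mtau m) (hind _ m1) (nullm _ m1) j a jm).
Qed.

Lemma ACA (x y z w : \bar R) : (x * y * (z * w) = x * z * (y * w))%E.
Proof. by rewrite -!muleA (muleCA y). Qed.

Lemma tilt (n' : nat) : forall j, (j <= n'.+1)%N -> forall a : R,
  ((expR (a * ln (alpha_ n'.+2)))%:E * P (Sp (tau n'.+1) j @^-1` [set a]) =
   ((n'.+2 - j)%:R / n'.+2%:R)%:E * P (Sp (tau n'.+2) j @^-1` [set a]))%E.
Proof.
elim=> [|j IH] hj a.
  have [->|a0] := eqVneq a 0.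
    rewrite mul0r expR0 subn0 divff ?pnatr_eq0 //; congr (_ * P _)%E.
    by apply/seteqP; split => w /=; rewrite !Sp0.
  have e (t : nat -> T -> R) : Sp t 0 @^-1` [set a] = set0.
    apply/seteqP; split => w //=; rewrite Sp0 => /esym/eqP.
    by rewrite (negbTE a0).
  by rewrite !e measure0 !mule0.
have jlt : (j < n'.+1)%N := hj.
rewrite (@convm n'.+1 j a) // (@convm n'.+2 j a) //; last exact: ltnW.
rewrite -!nneseriesZl; try (by move=> k _; apply: mule_ge0).
apply: eq_eseriesr => k _.
rewrite !distr //; try (by rewrite ltnS jlt); try (by rewrite ltnS ltnW).
rewrite (_ : a * ln _ = (a - (k.+1)%:R) * ln (alpha_ n'.+2) + (k.+1)%:R * ln (alpha_ n'.+2)); last first.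
  by rewrite -mulrDl subrK.
rewrite expRD EFinM ACA IH; last exact: ltnW.
rewrite -EFinM -muleA muleCA -EFinM /alpha_ tilt_real' //.
rewrite EFinM [in RHS]muleCA //.
by apply/andP; split => //; exact: ltnW.
Qed.

End tilt.


Lemma AB {R : realType} (n' s k : nat) :
  (s%:R + (k.+1)%:R) / n'.+2%:R - ln n'.+2%:R =
  alpha_ n'.+2 * (s%:R / n'.+1%:R - ln n'.+1%:R) + n'.+2%:R^-1 * (k.+1)%:R
    + delta_ n'.+2 :> R.
Proof.
rewrite /delta_ /alpha_ subn1 /=.
rewrite -[n'.+2%:R]natr1.
set M := n'.+1%:R.
have M0 : 0 < M by rewrite ltr0n.
have M10 : 0 < M + 1 by rewrite ltr_wpDr.
have hal : 1 - (M + 1)^-1 = M / (M + 1) by field; rewrite gt_eqF.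
rewrite hal ln_div ?posrE //.
by field; rewrite !gt_eqF.
Qed.

Lemma KE {R : realType} (n' s : nat) :
  n'.+2%:R * expR (s%:R * ln (alpha_ n'.+2)) =
  K_ n'.+2 * expR (- beta_ n'.+2 * (s%:R / n'.+1%:R - ln n'.+1%:R)) :> R.
Proof.
rewrite /K_ /beta_ /powR /alpha_ subn1 /=.
have al0 : (0 : R) < 1 - n'.+2%:R^-1.
  by rewrite subr_gt0 invf_lt1 // ltr1n.
rewrite (gt_eqF al0) -mulrA -expRD; congr (_ * expR _).
have M0 : (n'.+1%:R : R) != 0 by rewrite pnatr_eq0.
by field.
Qed.

Section main.
Context {d : measure_display} {T : measurableType d} {R : realType}.
Variable (P : probability T R).
Variable tau : nat -> nat -> T -> R.
Hypothesis mtau : forall m i, measurable_fun [set: T] (tau m i).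
Hypothesis hgeom : forall m i : nat, (1 <= m)%N -> (1 <= i <= m)%N ->
     is_geom P (tau m i) ((m.+1 - i)%:R / m%:R).
Hypothesis hind : forall m : nat, (1 <= m)%N ->
     mutually_independent P (index_iota 1 m.+1) (tau m).

Lemma mZm m : measurable_fun [set: T] (Zm tau m).
Proof.
rewrite /Zm /Tm; apply: measurable_funB; last exact: measurable_cst.
apply: measurable_funM; last exact: measurable_cst.
by apply: measurable_sum => i; exact: mtau.
Qed.

Lemma eqZ m s : (1 <= m)%N ->
  Zm tau m @^-1` [set s%:R / m%:R - ln m%:R] = Sp (tau m) m @^-1` [set s%:R].
Proof.
move=> m1; have m0 : (m%:R : R)^-1 != 0 by rewrite invr_eq0 pnatr_eq0 -lt0n.
apply/seteqP; split => w /=; rewrite /Zm.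
- by move=> /addIr /(mulIf m0).
- by move=> h; rewrite (_ : Tm tau m w = Sp (tau m) m w) // h.
Qed.

Local Open Scope ereal_scope.

Lemma LHSdec (n' : nat) (g : R -> R) : measurable_fun [set: R] g -> (forall x, 0 <= g x)%R ->
  \int[P]_w (g (Zm tau n'.+2 w))%:E =
  \sum_(s <oo) \sum_(k <oo) ((g ((s%:R + (k.+1)%:R) / n'.+2%:R - ln n'.+2%:R))%:E *
     P (Sp (tau n'.+2) n'.+1 @^-1` [set s%:R] `&` tau n'.+2 n'.+2 @^-1` [set (k.+1)%:R])).
Proof.
move=> mg g0.
apply: double_int.
- by apply/measurable_EFinP; apply: measurableT_comp => //; exact: mZm.
- by move=> t; rewrite lee_fin.
- by apply: mSp => i; exact: mtau.
- exact: mtau.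
- exact: nat_inj.
- exact: natS_inj.
- exact: (Sp_nat P (tau n'.+2) n'.+2 (mtau _) (nullm P tau mtau hgeom n'.+2 isT) n'.+1 (leqnSn _)).
- by apply: (nullm P tau mtau hgeom n'.+2 isT); rewrite leqnn.
- move=> s k t Ss tk; rewrite /Zm (_ : Tm tau n'.+2 t = Sp (tau n'.+2) n'.+2 t) //.
  by rewrite SpS Ss tk.
Qed.

Lemma RHSdec (n' : nat) (G : T -> R) (g : R -> R) :
  measurable_fun [set: T] G ->
  is_scaled_geom P G (n'.+2%:R^-1) (n'.+2%:R^-1) ->
  measurable_fun [set: R] g -> (forall x, 0 <= g x)%R ->
  \int[P]_w (expR (- beta_ n'.+2 * Zm tau n'.+1 w) *
        g (alpha_ n'.+2 * Zm tau n'.+1 w + G w + delta_ n'.+2))%:E =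
  \sum_(s <oo) \sum_(k <oo)
    ((expR (- beta_ n'.+2 * (s%:R / n'.+1%:R - ln n'.+1%:R)) *
      g (alpha_ n'.+2 * (s%:R / n'.+1%:R - ln n'.+1%:R) + n'.+2%:R^-1 * (k.+1)%:R
         + delta_ n'.+2))%:E *
     P (Zm tau n'.+1 @^-1` [set (s%:R / n'.+1%:R - ln n'.+1%:R)%R] `&`
        G @^-1` [set (n'.+2%:R^-1 * (k.+1)%:R)%R])).
Proof.
move=> mG hG mg g0.
have N0 : ((n'.+2%:R : R)^-1 != 0)%R by rewrite invr_eq0 pnatr_eq0.
have M0 : ((n'.+1%:R : R)^-1 != 0)%R by rewrite invr_eq0 pnatr_eq0.
apply: double_int.
- apply/measurable_EFinP; apply: measurable_funM.
    apply: measurableT_comp; first exact: measurable_expR.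
    by apply: measurable_funM; [exact: measurable_cst | exact: mZm].
  apply: measurableT_comp; first exact: mg.
  apply: measurable_funD; last exact: measurable_cst.
  apply: measurable_funD; last exact: mG.
  by apply: measurable_funM; [exact: measurable_cst | exact: mZm].
- by move=> t; rewrite lee_fin; apply: mulr_ge0; [exact: expR_ge0 | exact: g0].
- exact: mZm.
- exact: mG.
- by move=> a b /addIr /(mulIf M0) /nat_inj.
- by move=> a b /(mulfI N0) /natS_inj.
- rewrite (_ : \bigcup_s _ = \bigcup_s Sp (tau n'.+1) n'.+1 @^-1` [set s%:R]); last first.
    by apply: eq_bigcupr => s _; exact: eqZ.
  exact: (Sp_nat P (tau n'.+1) n'.+1 (mtau _) (nullm P tau mtau hgeom n'.+1 isT) n'.+1 (leqnn _)).
- apply: (geom_null P G _ (n'.+2%:R^-1) mG).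
  + by move=> a b /(mulfI N0) /natS_inj.
  + by rewrite invr_gt0 ltr0n invf_le1 // ler1n.
  + by move=> k; rewrite (hG k.+1) // subn1.
- by move=> s k t -> ->.
Qed.

Lemma keyM (n' : nat) (G : T -> R) (g : R -> R) :
  measurable_fun [set: T] G ->
  is_scaled_geom P G (n'.+2%:R^-1) (n'.+2%:R^-1) ->
  independent2 P (Zm tau n'.+1) G ->
  measurable_fun [set: R] g -> (forall x, 0 <= g x)%R ->
  \int[P]_w (g (Zm tau n'.+2 w))%:E =
  (K_ n'.+2)%:E * \int[P]_w (expR (- beta_ n'.+2 * Zm tau n'.+1 w) *
        g (alpha_ n'.+2 * Zm tau n'.+1 w + G w + delta_ n'.+2))%:E.
Proof.
move=> mG hG hi2 mg g0.
rewrite LHSdec // RHSdec //.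
have K0 : (0 <= K_ n'.+2 :> R)%R.
  by rewrite /K_ mulr_ge0 // powR_ge0.
have c0 (x y : R) : 0 <= (expR x * g y)%:E.
  by rewrite lee_fin; apply: mulr_ge0; [exact: expR_ge0 | exact: g0].
rewrite -nneseriesZl; last first.
  by move=> s _; apply: nneseries_ge0 => k _ _; apply: mule_ge0.
apply: eq_eseriesr => s _.
rewrite -nneseriesZl; last by move=> k _; apply: mule_ge0.
apply: eq_eseriesr => k _.
rewrite hi2; try exact: measurable_set1.
rewrite eqZ //.
have iL : P (Sp (tau n'.+2) n'.+1 @^-1` [set s%:R] `&` tau n'.+2 n'.+2 @^-1` [set (k.+1)%:R]) =
    P (Sp (tau n'.+2) n'.+1 @^-1` [set s%:R]) * P (tau n'.+2 n'.+2 @^-1` [set (k.+1)%:R]).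
  have e : tau n'.+2 n'.+2 @^-1` [set (k.+1)%:R] =
      C (tau n'.+2) [:: n'.+2] (fun _ => [set (k.+1)%:R]).
    by rewrite C_cons C_nil setIT.
  rewrite e (indepS P (tau n'.+2) n'.+2 (mtau _) (hind n'.+2 isT)
     (nullm P tau mtau hgeom n'.+2 isT) n'.+1 (leqnSn _)) //; try (by move=> _; exact: measurable_set1).
  - by move=> i; rewrite inE => /eqP ->; rewrite ltnSn.
have eQ : P (tau n'.+2 n'.+2 @^-1` [set (k.+1)%:R]) =
    P (G @^-1` [set (n'.+2%:R^-1 * (k.+1)%:R)%R]).
  rewrite (distr P tau hgeom n'.+2 n'.+2 k isT); last by rewrite leqnn.
  by rewrite (hG k.+1) // subn1 subSnn mul1r.
have T2 : P (Sp (tau n'.+2) n'.+1 @^-1` [set s%:R]) =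
    (n'.+2%:R * expR (s%:R * ln (alpha_ n'.+2)))%:E *
    P (Sp (tau n'.+1) n'.+1 @^-1` [set s%:R]).
  have := tilt P tau mtau hgeom hind n' n'.+1 (leqnn _) s%:R.
  rewrite subSnn => h.
  by rewrite EFinM -muleA h muleA -EFinM mul1r mulfV ?pnatr_eq0 // mul1e.
rewrite iL eQ T2 !muleA -!EFinM.
congr (_ * _ * _); congr (_%:E).
by rewrite AB KE; ring.
Qed.

End main.

Lemma mulBpos {R : realType} (k : R) (a b : \bar R) : (0 < k)%R -> (0 <= a)%E -> (0 <= b)%E ->
  (k%:E * (a - b) = k%:E * a - k%:E * b)%E.
Proof.
move=> k0 a0 b0.
case: b b0 => [b| |] // b0.
  by rewrite muleBr // fin_num_adde_defl.
rewrite (gt0_muley (x:=k%:E)) ?lte_fin // !addeNy.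
case: a a0 => [a| |] // a0.
- by rewrite gt0_muleNy ?lte_fin.
- by rewrite gt0_muleNy ?lte_fin.
Qed.

Lemma maxM {R : realType} (e y : R) : (0 < e)%R -> Num.max (e * y) 0 = e * Num.max y 0.
Proof.
by move=> e0; rewrite maxr_pMr ?ltW // mulr0.
Qed.

Theorem lemma3p3 (R : realType) (d : measure_display) (T : measurableType d)
  (P : probability T R) (tau : nat -> nat -> {RV P >-> R}) (G : {RV P >-> R})
  (f : R -> R) (n : nat) :
  (forall x : R, derivable f x 1) -> continuous (derive1 f) ->
  (2 <= n)%N ->
  (forall m i : nat, (1 <= m)%N -> (1 <= i <= m)%N ->
     is_geom P (tau m i) ((m.+1 - i)%:R / m%:R)) ->
  (forall m : nat, (1 <= m)%N ->
     mutually_independent P (index_iota 1 m.+1) (fun i => tau m i : T -> R)) ->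
  is_scaled_geom P G (n%:R^-1) (n%:R^-1) ->
  independent2 P (Zm (fun m i => tau m i : T -> R) n.-1) G ->
  ('E_P[fun w => (derive1 f) (Zm (fun m i => tau m i : T -> R) n w)] =
  ((K_ n)%:E *
   'E_P[fun w => (expR (- beta_ n * Zm (fun m i => tau m i : T -> R) n.-1 w) *
        (derive1 f) (alpha_ n * Zm (fun m i => tau m i : T -> R) n.-1 w + G w + delta_ n))%R])%E)%E.
Proof.
move=> _ fc n2 hgeom hind hG hi2.
case: n n2 hG hi2 => [|[|n']] // _ hG hi2.
set tau' := (fun m i => tau m i : T -> R) in hgeom hind hi2 *.
have mtau : forall m i, measurable_fun [set: T] (tau' m i).
  by move=> m i; exact: measurable_funPT.
have mG : measurable_fun [set: T] G by exact: measurable_funPT.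
set g := derive1 f in fc *.
have mg : measurable_fun [set: R] g := continuous_measurable_fun fc.
pose gp := g \max (cst 0%R).
pose gn := (\- g) \max (cst 0%R).
have mgp : measurable_fun [set: R] gp.
  exact: (measurable_maxr mg (measurable_cst _)).
have mgn : measurable_fun [set: R] gn.
  exact: (measurable_maxr (measurable_funN mg) (measurable_cst _)).
have gp0 x : (0 <= gp x)%R by rewrite /gp /= le_max lexx orbT.
have gn0 x : (0 <= gn x)%R by rewrite /gn /= le_max lexx orbT.
rewrite !expectation.unlock integralE [in RHS]integralE.
have Kp : (0 < K_ n'.+2 :> R)%R.
  by rewrite /K_ mulr_gt0 ?ltr0n // powR_gt0 // subr_gt0 invf_lt1 ?ltr1n.
set Z2 := Zm tau' n'.+2; set Z1 := Zm tau' n'.+1.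
set e := fun x => expR (- beta_ n'.+2 * Z1 x).
set B := fun x => alpha_ n'.+2 * Z1 x + G x + delta_ n'.+2.
have e0 x : (0 < e x)%R by exact: expR_gt0.
rewrite (eq_integral (fun x => (gp (Z2 x))%:E)); last first.
  by move=> x _; rewrite funeposE /gp /= EFin_max.
rewrite [X in (_ - X)%E](eq_integral (fun x => (gn (Z2 x))%:E)); last first.
  by move=> x _; rewrite funenegE /gn /= EFin_max.
rewrite [X in (_ * (X - _))%E](eq_integral (fun x => (e x * gp (B x))%:E)); last first.
  by move=> x _; rewrite funeposE /gp /= -EFin_max -maxM.
rewrite [X in (_ * (_ - X))%E](eq_integral (fun x => (e x * gn (B x))%:E)); last first.
  by move=> x _; rewrite funenegE /gn /= -EFin_max -maxM ?mulrN.
rewrite (keyM P tau' mtau hgeom hind n' G gp mG hG hi2 mgp gp0).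
rewrite (keyM P tau' mtau hgeom hind n' G gn mG hG hi2 mgn gn0).
rewrite [RHS]mulBpos //.
- by apply: integral_ge0 => x _; rewrite lee_fin mulr_ge0 // ltW.
- by apply: integral_ge0 => x _; rewrite lee_fin mulr_ge0 // ltW.
Qed.
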